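(* In incentivized exploration with two arms, where the prior means satisfy $\mu_1^0\ge\mu_2^0$, the Bayesian-greedy algorithm never chooses arm $2$ with probability at least $\mu_1^0-\mu_2^0$.
   Context: Two arms; a mean reward vector $\mu=(\mu_1,\mu_2)\in[0,1]^2$ is drawn from a Bayesian prior $\mathcal{P}$ (arbitrary, possibly correlated); there is a known family of reward distributions $(\mathcal{D}_x)_{x\in[0,1]}$ on $[0,1]$, each with mean $x$ and finitely many possible values; whenever arm $a$ is chosen, its reward is drawn independently from $\mathcal{D}_{\mu_a}$. Prior means: $\mu_a^0=\mathbb{E}[\mu_a]$. Over $T$ rounds, the Bayesian-greedy algorithm chooses, in each round $t$, an arm in $\arg\max_{a}\mathbb{E}[\mu_a\mid H_{t-1}]$, where $H_{t-1}=((a_s,r_s):s\in[t-1])$ is the history of chosen arms and rewards and the expectation is over the prior. *)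

(* Defs.v *)
From mathcomp Require Import all_boot all_order all_algebra.
From mathcomp Require Import all_classical all_reals all_analysis.
Set Implicit Arguments. Unset Strict Implicit. Unset Printing Implicit Defensive.
Import Order.TTheory GRing.Theory Num.Theory.
Local Open Scope classical_set_scope.
Local Open Scope ring_scope.

(* Arms are 'I_2 : arm 1 of the paper is ord0, arm 2 is (1 : 'I_2). *)

(* A reward family (D_x)_{x in [0,1]}: D x v is the probability that a reward
   drawn from D_x equals v.  Each D_x has finite support contained in [0,1]
   and mean x. *)
Definition reward_family (R : realType) (D : R -> R -> R) : Prop :=
  forall x : R, 0 <= x <= 1 ->
    exists s : seq R,
      [/\ uniq s,
          (forall v, v \notin s -> D x v = 0),
          (forall v, 0 <= D x v),
          (forall v, v \in s -> 0 <= v <= 1)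
        & (\sum_(v <- s) D x v = 1 /\ \sum_(v <- s) D x v * v = x)].

Definition observed (d : measure_display) (Omega : measurableType d)
  (R : realType) (a : nat -> Omega -> 'I_2) (tape : nat -> 'I_2 -> Omega -> R)
  (s : nat) : Omega -> R :=
  fun w => tape s (a s w) w.

Definition history_gen (d : measure_display) (Omega : measurableType d)
  (R : realType) (a : nat -> Omega -> 'I_2) (r : nat -> Omega -> R) (t : nat)
  : set (set Omega) :=
  [set A | exists s, (s < t)%N /\
     ((exists i : 'I_2, A = a s @^-1` [set i]) \/
      (exists B : set R, measurable B /\ A = r s @^-1` B))].

Definition history_sigma (d : measure_display) (Omega : measurableType d)
  (R : realType) (a : nat -> Omega -> 'I_2) (r : nat -> Omega -> R) (t : nat)
  : set (set Omega) :=
  <<s history_gen a r t >>.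

Definition cond_exp_version (d : measure_display) (Omega : measurableType d)
  (R : realType) (P : probability Omega R) (G : set (set Omega))
  (X Y : Omega -> R) : Prop :=
  [/\ (forall B : set R, measurable B -> G (Y @^-1` B)),
      P.-integrable setT (EFin \o Y)
    & forall A, G A ->
        (\int[P]_(w in A) (Y w)%:E = \int[P]_(w in A) (X w)%:E)%E].

(* The Bayesian-greedy rule: in each round t (0-based), the chosen arm
   maximizes (a version of) E[mu_i | H_{t}] where H_t is the history of
   rounds s < t. *)
Definition bayes_greedy (d : measure_display) (Omega : measurableType d)
  (R : realType) (P : probability Omega R) (mu : 'I_2 -> Omega -> R)
  (a : nat -> Omega -> 'I_2) (tape : nat -> 'I_2 -> Omega -> R) : Prop :=
  forall t : nat, exists Y : 'I_2 -> Omega -> R,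
    (forall i, cond_exp_version P (history_sigma a (observed a tape) t)
                                (mu i) (Y i)) /\
    (forall w j, Y j w <= Y (a t w) w).

(* Bayesian model: mu is the (prior-distributed) mean vector in [0,1]^2,
   and conditionally on mu, the reward-tape entries tape t i (reward of arm i
   if pulled in round t) are independent with law D_{mu_i}. *)
Definition bandit_model (d : measure_display) (Omega : measurableType d)
  (R : realType) (P : probability Omega R) (D : R -> R -> R)
  (mu : 'I_2 -> Omega -> R) (tape : nat -> 'I_2 -> Omega -> R) : Prop :=
  [/\ forall i, measurable_fun setT (mu i),
      forall i w, 0 <= mu i w <= 1,
      forall t i, measurable_fun setT (tape t i)
    & forall (n : nat) (ts : 'I_n -> nat) (arms : 'I_n -> 'I_2)
             (vs : 'I_n -> R) (B : 'I_2 -> set R),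
        injective (fun k => (ts k, arms k)) ->
        (forall i, measurable (B i)) ->
        P ([set w | forall i, B i (mu i w)] `&`
           [set w | forall k, tape (ts k) (arms k) w = vs k]) =
        (\int[P]_(w in [set w | forall i, B i (mu i w)])
           (\prod_(k < n) D (mu (arms k) w) (vs k))%:E)%E].

Definition arm1 : 'I_2 := ord0.
Definition arm2 : 'I_2 := ord_max.

(* Main.v *)
Require Import Defs.
From mathcomp Require Import all_boot all_order all_algebra.
From mathcomp Require Import all_classical all_reals all_analysis.
From mathcomp Require Import lra.
Import Order.TTheory GRing.Theory Num.Theory.
Local Open Scope classical_set_scope.
Local Open Scope ring_scope.

Lemma ereal_aux (R : realType) (a1 a2 b1 b2 : \bar R) :
  a1 \is a fin_num -> a2 \is a fin_num -> b1 \is a fin_num -> b2 \is a fin_num ->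
  (b1 <= b2)%E -> (a1 + b1 - (a2 + b2) <= a1 - a2)%E.
Proof.
case: a1 a2 b1 b2 => [x1| |] [x2| |] [y1| |] [y2| |] //= _ _ _ _.
rewrite !lee_fin => h; lra.
Qed.

Lemma lt_in_sigma (d : measure_display) (Omega : measurableType d) (R : realType)
  (G : set (set Omega)) (f g : Omega -> R) :
  (forall B : set R, measurable B -> <<s G >> (f @^-1` B)) ->
  (forall B : set R, measurable B -> <<s G >> (g @^-1` B)) ->
  <<s G >> [set w | f w < g w].
Proof.
move=> hf hg.
have mf : measurable_fun (setT : set (g_sigma_algebraType G)) f.
  by move=> _ B mB; rewrite setTI; exact: hf.
have mg : measurable_fun (setT : set (g_sigma_algebraType G)) g.
  by move=> _ B mB; rewrite setTI; exact: hg.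
have := measurable_realfun.measurable_fun_ltr mf mg measurableT (Y := [set true]) I.
by rewrite setTI; congr (<<s G >> _); apply/seteqP; split => w /=.
Qed.
Lemma int_bdd (R : realType) (d : measure_display) (Omega : measurableType d)
  (P : probability Omega R) (f : Omega -> R) (U : set Omega) : measurable U ->
  measurable_fun setT f -> (forall w, 0 <= f w <= 1) ->
  P.-integrable U (EFin \o f).
Proof.
move=> mU mf hf.
apply: (le_integrable mU _ _ (finite_measure_integrable_cst P 1%R mU)).
- apply/measurable_realfun.measurable_EFinP; exact: measurable_funS mf.
- move=> x _ /=; have /andP[h0 h1] := hf x.
  by rewrite lee_fin normr1 ger0_norm.
Qed.

Lemma ord2_cases (i : 'I_2) : i = arm1 \/ i = arm2.
Proof.
case: i => [[|[|n]] Hi]; [left|right|by []]; exact: val_inj.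
Qed.

Lemma hist_meas (R : realType) (d : measure_display) (Omega : measurableType d)
  (a : nat -> Omega -> 'I_2) (tape : nat -> 'I_2 -> Omega -> R) t :
  (forall t (i : 'I_2), measurable (a t @^-1` [set i])) ->
  (forall t i, measurable_fun setT (tape t i)) ->
  history_sigma a (observed a tape) t `<=` measurable.
Proof.
move=> ma mt; apply: smallest_sub; first exact: sigma_algebra_measurable.
move=> A [s [_ [[i ->]|[B [mB ->]]]]]; first exact: ma.
have -> : observed a tape s @^-1` B =
  (a s @^-1` [set arm1] `&` tape s arm1 @^-1` B) `|`
  (a s @^-1` [set arm2] `&` tape s arm2 @^-1` B).
  apply/seteqP; split => w /=.
    rewrite /observed; case: (ord2_cases (a s w)) => ->; by [left|right].
  by rewrite /observed; case=> -[-> ?].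
apply: measurableU; apply: measurableI => //;
  by rewrite -[X in measurable X]setTI; apply: mt.
Qed.

Lemma hist_mono (R : realType) (d : measure_display) (Omega : measurableType d)
  (a : nat -> Omega -> 'I_2) (r : nat -> Omega -> R) t :
  history_sigma a r t `<=` history_sigma a r t.+1.
Proof.
apply: sub_smallest2r; first exact: smallest_sigma_algebra.
move=> A [s [st H]]; exists s; split => //; exact: ltnW.
Qed.

Theorem theorem11p7 (R : realType) (d : measure_display) (Omega : measurableType d)
  (P : probability Omega R) (D : R -> R -> R)
  (mu : 'I_2 -> Omega -> R) (tape : nat -> 'I_2 -> Omega -> R)
  (a : nat -> Omega -> 'I_2) (T : nat) :
  reward_family D ->
  (forall v : R, measurable_fun [set x : R | 0 <= x <= 1] (fun x => D x v)) ->
  bandit_model P D mu tape ->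
  (forall t (i : 'I_2), measurable (a t @^-1` [set i])) ->
  bayes_greedy P mu a tape ->
  (\int[P]_w (mu arm2 w)%:E <= \int[P]_w (mu arm1 w)%:E)%E ->
  (\int[P]_w (mu arm1 w)%:E - \int[P]_w (mu arm2 w)%:E
     <= P [set w | forall t, (t < T)%N -> a t w = arm1])%E.
Proof.
move=> _ _ [mmu bmu mtape _] ma bg _.
set r := observed a tape.
set A := fun t => [set w | forall s, (s < t)%N -> a s w = arm1].
have HM t : history_sigma a r t `<=` measurable := @hist_meas R d Omega a tape t ma mtape.
have intmu i U : measurable U -> P.-integrable U (EFin \o mu i).
  by move=> mU; exact: int_bdd mU (mmu i) (bmu i).
set c := (\int[P]_w (mu arm1 w)%:E - \int[P]_w (mu arm2 w)%:E)%E.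
have key t : exists U, [/\ history_sigma a r t U, U `<=` A t &
   (c <= \int[P]_(w in U) (mu arm1 w)%:E - \int[P]_(w in U) (mu arm2 w)%:E)%E].
  elim: t => [|t [U [HU UA cU]]].
    exists setT; split => //.
    exact: (@measurableT _ (g_sigma_algebraType (history_gen a r 0))).
  have [Y [cY gY]] := bg t.
  have [mY1 iY1 eY1] := cY arm1.
  have [mY2 iY2 eY2] := cY arm2.
  set V := [set w | Y arm2 w < Y arm1 w].
  have HV : history_sigma a r t V := @lt_in_sigma d Omega R _ _ _ mY2 mY1.
  have HU' : history_sigma a r t (U `&` V).
    exact: (@measurableI _ (g_sigma_algebraType (history_gen a r t))).
  have HU'' : history_sigma a r t (U `&` ~` V).
    apply: (@measurableI _ (g_sigma_algebraType (history_gen a r t))) => //.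
    exact: (@measurableC _ (g_sigma_algebraType (history_gen a r t))).
  exists (U `&` V); split.
  - exact: hist_mono.
  - move=> w [/UA Aw Vw] s; rewrite ltnS leq_eqVlt => /predU1P[->|/Aw//].
    case: (ord2_cases (a t w)) => // h.
    have := gY w arm1; rewrite h => /(lt_le_trans Vw); by rewrite ltxx.
  - rewrite -(eY1 _ HU') -(eY2 _ HU') (le_trans cU) // -(eY1 _ HU) -(eY2 _ HU).
    have mU := HM _ _ HU; have mUV := HM _ _ HU'; have mUnV := HM _ _ HU''.
    have mYi i : measurable_fun setT (Y i).
      by move=> _ B mB; rewrite setTI; apply: HM; have [] := cY i; move=> + _ _; apply.
    have iYi i E : measurable E -> P.-integrable E (EFin \o Y i).
      move=> mE; apply: (integrableS measurableT mE (@subsetT _ E)).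
      by have [] := cY i.
    have UE : U = (U `&` V) `|` (U `&` ~` V) by rewrite -setIUr setUCr setIT.
    have disj : [disjoint U `&` V & U `&` ~` V].
      by rewrite /disj_set setIACA setICr setI0.
    have split i : (\int[P]_(w in U) (Y i w)%:E =
       \int[P]_(w in U `&` V) (Y i w)%:E + \int[P]_(w in U `&` ~` V) (Y i w)%:E)%E.
      rewrite [in LHS]UE integral_setU // -UE; apply/measurable_realfun.measurable_EFinP.
      exact: measurable_funS (mYi i).
    rewrite !split; apply: ereal_aux.
    + exact: integrable_fin_num (iYi _ _ mUV).
    + exact: integrable_fin_num (iYi _ _ mUV).
    + exact: integrable_fin_num (iYi _ _ mUnV).
    + exact: integrable_fin_num (iYi _ _ mUnV).
    + apply: le_integral => //; try exact: iYi.
      by move=> w /[!inE] -[_ /negP]; rewrite -leNgt lee_fin.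
have AM t : measurable (A t).
  elim: t => [|t IH].
    by have -> : A 0 = setT by apply/seteqP; split.
  have -> : A t.+1 = A t `&` a t @^-1` [set arm1].
    apply/seteqP; split => w /=.
      by move=> h; split; [move=> s st; apply: h; exact: ltnW|apply: h].
    move=> [h1 h2] s; rewrite ltnS leq_eqVlt => /predU1P[->//|]; exact: h1.
  exact: measurableI.
have [U [HU UA cU]] := key T.
have mU := HM _ _ HU.
apply: (le_trans cU); rewrite -integralB_EFin //; try exact: intmu.
apply: (@le_trans _ _ (\int[P]_(w in U) (cst 1%E) w)%E).
  apply: le_integral => //.
  - exact: (integrableB mU (intmu arm1 U mU) (intmu arm2 U mU)).
  - exact: finite_measure_integrable_cst.
  - move=> w _; rewrite lee_fin; have /andP[h1 h2] := bmu arm1 w.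
    have /andP[h3 h4] := bmu arm2 w; lra.
rewrite integral_cst // mul1e; apply: le_measure; rewrite ?inE //.
exact: (AM T).
Qed.
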